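(* Given an $L_1$-periodic tiling $T$ of type $(\gamma_1,\gamma_2,\gamma_3)$ with $\gamma_1,\gamma_2,\gamma_3>0$ and a source $z\neq0$ in $T$, let $T'=\mu_z(T)$ be the flipped tiling. Then \[ h_{T'}(x)=\begin{cases}h_T(x),&x\notin z+L_1,\\ h_T(x)+3,&\text{else}.\end{cases} \] Similarly, for a sink $z\neq0$ in $T$ and $T'=\mu_z(T)$, \[ h_{T'}(x)=\begin{cases}h_T(x),&x\notin z+L_1,\\ h_T(x)-3,&\text{else}.\end{cases} \]
   Context: Let $u^\top=(1,0)$, $v^\top=-(\tfrac12,\tfrac{\sqrt3}{2})$, $w=-(u+v)$, $L_0=\langle u,v\rangle$, and $L_1\le L_0$ a full-rank sublattice. An $L_1$-periodic tiling is an $L_1$-invariant map $T\colon L_0\to\{U,V,W\}$ such that for every $x$ exactly one of $T(x)=W$, $T(x+u)=V$, $T(x-v)=U$ holds; $T(x)$ removes one arrow of the upward triangle $x\to x+u\to x-v\to x$ ($U$: $x\to x+u$; $V$: $x-v\to x$; $W$: $x+u\to x-v$), and an arrow $x\to x+\alpha$ ($\alpha\in\{u,v,w\}$) is in $T$ if not removed. The type of $T$ counts the values $U,V,W$ over $L_0/L_1$. The height function $h_T$ satisfies $h_T(0)=0$ and $h_T(x+\alpha)=h_T(x)+1$ if $x\to x+\alpha$ is in $T$, else $h_T(x)-2$. A source (resp. sink) is a point where no arrow in $T$ ends (resp. starts). The flip $\mu_z(T)$ at a source $z$ is the tiling whose set of removed arrows is obtained from that of $T$ by deleting all arrows ending in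 $z+L_1$ and adding all arrows starting in $z+L_1$ (so $z$ becomes a sink); dually for a sink (delete removed arrows starting in $z+L_1$, add all arrows ending in $z+L_1$). Geometrically, the three lozenges meeting at each point of $z+L_1$ are replaced by the opposite configuration. *)

(* Defs.v *)
(* Points of L_0 = <u,v> are encoded by integer coordinates:
   (a,b) : Z*Z stands for a*u + b*v.  Thus u = (1,0), v = (0,1),
   w = -(u+v) = (-1,-1). *)
From Stdlib Require Import ZArith.
Open Scope Z_scope.

Definition point := (Z * Z)%type.

Definition padd (x y : point) : point := (fst x + fst y, snd x + snd y).
Definition psub (x y : point) : point := (fst x - fst y, snd x - snd y).
Definition pscale (m : Z) (x : point) : point := (m * fst x, m * snd x).
Definition p0 : point := (0, 0).

Definition vu : point := (1, 0).
Definition vv : point := (0, 1).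
Definition vw : point := (-1, -1).

Inductive dir := Du | Dv | Dw.
Definition vec (d : dir) : point :=
  match d with Du => vu | Dv => vv | Dw => vw end.

Inductive tile := TU | TV | TW.

(* A full-rank sublattice L_1 of L_0 ~ Z^2, given by a basis (p, q). *)
Definition det (p q : point) : Z := fst p * snd q - snd p * fst q.
Definition inL1 (p q : point) (x : point) : Prop :=
  exists m n : Z, x = padd (pscale m p) (pscale n q).
Definition in_coset (p q : point) (z x : point) : Prop := inL1 p q (psub x z).

Definition exactly_one3 (A B C : Prop) : Prop :=
  (A /\ ~ B /\ ~ C) \/ (~ A /\ B /\ ~ C) \/ (~ A /\ ~ B /\ C).

Definition is_tiling (p q : point) (T : point -> tile) : Prop :=
  (forall x l, inL1 p q l -> T (padd x l) = T x) /\
  (forall x, exactly_one3 (T x = TW) (T (padd x vu) = TV) (T (psub x vv) = TU)).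

(* Arrow x -> x+u is the U-arrow of the triangle at x;
   arrow x -> x+v is the V-arrow (y-v -> y) of the triangle at y = x+v;
   arrow x -> x+w is the W-arrow (y+u -> y-v) of the triangle at y = x-u. *)
Definition removed (T : point -> tile) (x : point) (d : dir) : Prop :=
  match d with
  | Du => T x = TU
  | Dv => T (padd x vv) = TV
  | Dw => T (psub x vu) = TW
  end.

Definition is_height (T : point -> tile) (h : point -> Z) : Prop :=
  h p0 = 0 /\
  forall x d,
    (~ removed T x d -> h (padd x (vec d)) = h x + 1) /\
    (removed T x d -> h (padd x (vec d)) = h x - 2).

Definition is_source (T : point -> tile) (z : point) : Prop :=
  forall x d, padd x (vec d) = z -> removed T x d.
Definition is_sink (T : point -> tile) (z : point) : Prop :=
  forall d, removed T z d.

Definition flip_source_removed (p q : point) (T : point -> tile) (z x : point)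
  (d : dir) : Prop :=
  (removed T x d /\ ~ in_coset p q z (padd x (vec d))) \/ in_coset p q z x.
Definition flip_sink_removed (p q : point) (T : point -> tile) (z x : point)
  (d : dir) : Prop :=
  (removed T x d /\ ~ in_coset p q z x) \/ in_coset p q z (padd x (vec d)).

(* Main.v *)
Require Import Defs.
From Stdlib Require Import ZArith Lia Classical.
Open Scope Z_scope.

Ltac pt := unfold padd, psub, pscale, vu, vv, vw, p0 in *; simpl in *;
  repeat match goal with x : point |- _ => destruct x end; simpl in *;
  f_equal; lia.

Lemma zind (Q : Z -> Prop) : (forall a, Q a <-> Q (a + 1)) -> Q 0 -> forall a, Q a.
Proof.
  intros H H0. apply Z.peano_ind; [exact H0| |].
  - intros b IH. unfold Z.succ. exact (proj1 (H b) IH).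
  - intros a IH. apply (proj2 (H (Z.pred a))). replace (Z.pred a + 1) with a by lia. auto.
Qed.

Lemma propagate (P : point -> Prop) :
  (forall x, P x <-> P (padd x vu)) -> (forall x, P x <-> P (padd x vv)) ->
  P p0 -> forall x, P x.
Proof.
  intros Hu Hv H0 [a b].
  assert (Hb : forall b, P (0, b)).
  { apply zind; [|exact H0]. intro c. rewrite (Hv (0, c)).
    replace (padd (0, c) vv) with (0, c + 1) by pt. tauto. }
  revert a. apply zind; [|apply Hb]. intro c. rewrite (Hu (c, b)).
  replace (padd (c, b) vu) with (c + 1, b) by pt. tauto.
Qed.

Lemma rem_per p q T x l d : is_tiling p q T -> inL1 p q l ->
  (removed T (padd x l) d <-> removed T x d).
Proof.
  intros [Hp _] Hl. destruct d; simpl.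
  - rewrite Hp; tauto.
  - replace (padd (padd x l) vv) with (padd (padd x vv) l) by pt. rewrite Hp; tauto.
  - replace (psub (padd x l) vu) with (padd (psub x vu) l) by pt. rewrite Hp; tauto.
Qed.

Lemma from_coset p q T z x d : is_tiling p q T -> in_coset p q z x ->
  (removed T x d <-> removed T z d).
Proof.
  intros HT Hc. unfold in_coset in Hc.
  replace x with (padd z (psub x z)) by pt. apply (rem_per p q); auto.
Qed.

Lemma into_coset p q T z x d : is_tiling p q T -> in_coset p q z (padd x (vec d)) ->
  (removed T x d <-> removed T (psub z (vec d)) d).
Proof.
  intros HT Hc. unfold in_coset in Hc.
  replace x with (padd (psub z (vec d)) (psub (padd x (vec d)) z)) by (destruct d; pt).
  apply (rem_per p q); auto.
Qed.

Lemma src_out T z d : is_source T z -> ~ removed T z d.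
Proof.
  intros Hs. destruct d; simpl; intro E.
  - pose proof (Hs (psub z vv) Dv ltac:(pt)) as R. simpl in R.
    replace (padd (psub z vv) vv) with z in R by pt. congruence.
  - pose proof (Hs (padd z (1,1)) Dw ltac:(pt)) as R. simpl in R.
    replace (psub (padd z (1,1)) vu) with (padd z vv) in R by pt. congruence.
  - pose proof (Hs (psub z vu) Du ltac:(pt)) as R. simpl in R. congruence.
Qed.

Lemma src_in T z d : is_source T z -> removed T (psub z (vec d)) d.
Proof. intros Hs. apply Hs. destruct d; pt. Qed.

Lemma sink_in T z d : is_sink T z -> ~ removed T (psub z (vec d)) d.
Proof.
  intros Hs. pose proof (Hs Du) as A. pose proof (Hs Dv) as B. pose proof (Hs Dw) as C.
  simpl in *. destruct d; simpl; intro E.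
  - congruence.
  - replace (padd (psub z vv) vv) with z in E by pt. congruence.
  - replace (psub (psub z vw) vu) with (padd z vv) in E by pt. congruence.
Qed.

Lemma not0 p q z : ~ inL1 p q z -> ~ in_coset p q z p0.
Proof.
  intros H [m [n E]]. apply H. exists (-m), (-n).
  destruct z, p, q. unfold psub, padd, pscale, p0 in *; simpl in *.
  injection E; intros; f_equal; lia.
Qed.

Ltac finish := split; intros [A B]; split; intro Hc; try (exfalso; tauto);
  first [specialize (A ltac:(assumption)) | specialize (B ltac:(assumption))]; lia.

Theorem lemma6p39 (p q : point) (T : point -> tile) :
  det p q <> 0 ->
  is_tiling p q T ->
  (exists x, T x = TU) -> (exists x, T x = TV) -> (exists x, T x = TW) ->
  (forall (z : point) (T' : point -> tile) (h h' : point -> Z),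
      is_source T z -> ~ inL1 p q z ->
      (forall x d, removed T' x d <-> flip_source_removed p q T z x d) ->
      is_height T h -> is_height T' h' ->
      forall x, (~ in_coset p q z x -> h' x = h x) /\
                (in_coset p q z x -> h' x = h x + 3)) /\
  (forall (z : point) (T' : point -> tile) (h h' : point -> Z),
      is_sink T z -> ~ inL1 p q z ->
      (forall x d, removed T' x d <-> flip_sink_removed p q T z x d) ->
      is_height T h -> is_height T' h' ->
      forall x, (~ in_coset p q z x -> h' x = h x) /\
                (in_coset p q z x -> h' x = h x - 3)).
Proof.
  intros _ HT _ _ _. split.
  - intros z T' h h' Hs Hz HR [h0 Hh] [h0' Hh'].
    assert (St : forall x d,
      ((~ in_coset p q z x -> h' x = h x) /\ (in_coset p q z x -> h' x = h x + 3)) <->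
      ((~ in_coset p q z (padd x (vec d)) -> h' (padd x (vec d)) = h (padd x (vec d))) /\
       (in_coset p q z (padd x (vec d)) -> h' (padd x (vec d)) = h (padd x (vec d)) + 3))).
    { intros x d. destruct (Hh x d) as [N1 R1]. destruct (Hh' x d) as [N2 R2].
      specialize (HR x d). unfold flip_source_removed in HR.
      destruct (classic (in_coset p q z x)) as [Cx|Cx];
      destruct (classic (in_coset p q z (padd x (vec d)))) as [Cy|Cy].
      - pose proof (into_coset p q T z x d HT Cy). pose proof (src_in T z d Hs).
        rewrite R1 by tauto. rewrite R2 by tauto. finish.
      - pose proof (from_coset p q T z x d HT Cx). pose proof (src_out T z d Hs).
        rewrite N1 by tauto. rewrite R2 by tauto. finish.
      - pose proof (into_coset p q T z x d HT Cy). pose proof (src_in T z d Hs).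
        rewrite R1 by tauto. rewrite N2 by tauto. finish.
      - destruct (classic (removed T x d)).
        + rewrite R1 by tauto. rewrite R2 by tauto. finish.
        + rewrite N1 by tauto. rewrite N2 by tauto. finish. }
    apply propagate.
    + intro x. exact (St x Du).
    + intro x. exact (St x Dv).
    + pose proof (not0 p q z Hz). split; intros; [lia | tauto].
  - intros z T' h h' Hs Hz HR [h0 Hh] [h0' Hh'].
    assert (St : forall x d,
      ((~ in_coset p q z x -> h' x = h x) /\ (in_coset p q z x -> h' x = h x - 3)) <->
      ((~ in_coset p q z (padd x (vec d)) -> h' (padd x (vec d)) = h (padd x (vec d))) /\
       (in_coset p q z (padd x (vec d)) -> h' (padd x (vec d)) = h (padd x (vec d)) - 3))).
    { intros x d. destruct (Hh x d) as [N1 R1]. destruct (Hh' x d) as [N2 R2].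
      specialize (HR x d). unfold flip_sink_removed in HR.
      destruct (classic (in_coset p q z x)) as [Cx|Cx];
      destruct (classic (in_coset p q z (padd x (vec d)))) as [Cy|Cy].
      - pose proof (from_coset p q T z x d HT Cx). pose proof (Hs d).
        rewrite R1 by tauto. rewrite R2 by tauto. finish.
      - pose proof (from_coset p q T z x d HT Cx). pose proof (Hs d).
        rewrite R1 by tauto. rewrite N2 by tauto. finish.
      - pose proof (into_coset p q T z x d HT Cy). pose proof (sink_in T z d Hs).
        rewrite N1 by tauto. rewrite R2 by tauto. finish.
      - destruct (classic (removed T x d)).
        + rewrite R1 by tauto. rewrite R2 by tauto. finish.
        + rewrite N1 by tauto. rewrite N2 by tauto. finish. }
    apply propagate.
    + intro x. exact (St x Du).
    + intro x. exact (St x Dv).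
    + pose proof (not0 p q z Hz). split; intros; [lia | tauto].
Qed.
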